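(* Let $f(x)=a_nx^n+a_{n-1}x^{n-1}+\dots+a_1x+a_0\in\mathbb{Z}[x]$, where $n$ is not divisible by $3$. Suppose that there exists a prime $p$ such that $p\nmid a_n$, $p^3\mid a_i$ for all $0\leq i\leq n-1$, and $p^4\nmid a_0$. Then $f(x)$ is irreducible over $\mathbb{Z}$.
   Context: A nonconstant polynomial in $\mathbb{Z}[x]$ is called reducible over $\mathbb{Z}$ if it can be written as a product of two nonconstant polynomials in $\mathbb{Z}[x]$; otherwise it is irreducible over $\mathbb{Z}$. *)

(* Defs.v *)
From mathcomp Require Import all_boot all_order all_algebra.
Set Implicit Arguments. Unset Strict Implicit. Unset Printing Implicit Defensive.
Import GRing.Theory Num.Theory.
Local Open Scope ring_scope.

Definition reducible_over_Z (f : {poly int}) : Prop :=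
  exists g h : {poly int}, (1 < size g)%N /\ (1 < size h)%N /\ f = g * h.

Definition irreducible_over_Z (f : {poly int}) : Prop :=
  (1 < size f)%N /\ ~ reducible_over_Z f.

(* Main.v *)
Require Import Defs.
From mathcomp Require Import all_boot all_order all_algebra.
From mathcomp Require Import zify.
Import GRing.Theory Num.Theory.
Local Open Scope ring_scope.

Section S.
Variables (p n : nat).
Hypothesis Hp : prime p.

Definition nu (x : int) : nat := logn p `|x|%N.
Definition wt (q : {poly int}) (i : nat) : nat := (n * nu q`_i + 3 * i)%N.

Lemma dvd_nu (x : int) e : x != 0 -> ((p ^ e)%N%:Z %| x)%Z = (e <= nu x)%N.
Proof. move=> x0; rewrite dvdzE /= pfactor_dvdn // absz_gt0 //. Qed.

Lemma nuM (x y : int) : x != 0 -> y != 0 -> nu (x * y) = (nu x + nu y)%N.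
Proof. by move=> x0 y0; rewrite /nu abszM lognM // absz_gt0. Qed.

Lemma min_exists (q : {poly int}) : q != 0 -> exists mu I,
  [/\ q`_I != 0, wt q I = mu, (forall i, q`_i != 0 -> (mu <= wt q i)%N)
    & (forall i, (i < I)%N -> q`_i != 0 -> (mu < wt q i)%N)].
Proof.
move=> q0.
pose P := fun w => [exists i : 'I_(size q), (q`_i != 0) && (wt q i == w)].
have exP : exists w, P w.
  exists (wt q (size q).-1); apply/existsP.
  have hs : ((size q).-1 < size q)%N by rewrite prednK // size_poly_gt0.
  exists (Ordinal hs) => /=; rewrite eqxx andbT -lead_coefE lead_coef_eq0 //.
case: (ex_minnP exP) => mu /existsP [i0 /andP [Hi0 /eqP Hw0]] Hmin.
have exQ : exists i, (q`_i != 0) && (wt q i == mu) by exists i0; rewrite Hi0 Hw0 eqxx.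
case: (ex_minnP exQ) => I /andP [HI /eqP HwI] Imin.
exists mu, I; split => //.
  move=> i qi; case: (leqP (size q) i) => hi.
    by move: qi; rewrite nth_default ?eqxx.
  apply: Hmin; apply/existsP; exists (Ordinal hi); by rewrite /= qi eqxx.
move=> i iI qi; rewrite ltn_neqAle; apply/andP; split.
  apply/negP => /eqP e; have := Imin i; rewrite qi -e eqxx /= => /(_ isT).
  by rewrite leqNgt iI.
case: (leqP (size q) i) => hi.
  by move: qi; rewrite nth_default ?eqxx.
apply: Hmin; apply/existsP; exists (Ordinal hi); by rewrite /= qi eqxx.
Qed.


Lemma dvd_le (x : int) e1 e2 : (e1 <= e2)%N ->
  ((p ^ e2)%N%:Z %| x)%Z -> ((p ^ e1)%N%:Z %| x)%Z.
Proof. move=> le; rewrite !dvdzE /=; apply: dvdn_trans; exact: dvdn_exp2l. Qed.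

Lemma prod_wt (g h : {poly int}) mug Ig muh Ih : (0 < n)%N ->
  [/\ g`_Ig != 0, wt g Ig = mug, (forall i, g`_i != 0 -> (mug <= wt g i)%N)
    & (forall i, (i < Ig)%N -> g`_i != 0 -> (mug < wt g i)%N)] ->
  [/\ h`_Ih != 0, wt h Ih = muh, (forall i, h`_i != 0 -> (muh <= wt h i)%N)
    & (forall i, (i < Ih)%N -> h`_i != 0 -> (muh < wt h i)%N)] ->
  (g * h)`_(Ig + Ih) != 0 /\ wt (g * h) (Ig + Ih) = (mug + muh)%N.
Proof.
move=> n0 [g0 wg gmin gstr] [h0 wh hmin hstr].
set e := (nu g`_Ig + nu h`_Ih)%N.
have mainnz : g`_Ig * h`_Ih != 0 by rewrite mulf_neq0.
have main_e : nu (g`_Ig * h`_Ih) = e by rewrite nuM.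
have hI : (Ig < (Ig + Ih).+1)%N by rewrite ltnS leq_addr.
rewrite /wt coefM (bigD1 (Ordinal hI)) //= addKn.
set r := \sum_(_ | _) _.
have rdiv : ((p ^ e.+1)%N%:Z %| r)%Z.
  apply: rpred_sum => [[j hj]] /= hne.
  have {}hne : j != Ig by apply: contra hne => /eqP ej; apply/eqP/val_inj.
  have [gj0|gj] := eqVneq g`_j 0; first by rewrite gj0 mul0r dvdz0.
  have [hj0|hjn] := eqVneq h`_(Ig + Ih - j) 0; first by rewrite hj0 mulr0 dvdz0.
  rewrite dvd_nu ?mulf_neq0 // nuM //.
  have: (n * e < n * (nu g`_j + nu h`_(Ig + Ih - j)))%N.
    move: (gmin _ gj) (hmin _ hjn); rewrite /wt -wg -wh /wt.
    case: (ltngtP j Ig) hne => // hlt _.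
      move: (gstr _ hlt gj); rewrite /wt -wg /wt /e; lia.
    have hlt2 : (Ig + Ih - j < Ih)%N by lia.
    move: (hstr _ hlt2 hjn); rewrite /wt -wh /wt /e; lia.
  by rewrite ltn_pmul2l.
have maind : ~~ ((p ^ e.+1)%N%:Z %| g`_Ig * h`_Ih)%Z by rewrite dvd_nu // main_e ltnn.
have sumnd : ~~ ((p ^ e.+1)%N%:Z %| g`_Ig * h`_Ih + r)%Z by rewrite rpredDr.
have sumnz : g`_Ig * h`_Ih + r != 0 by apply: contra sumnd => /eqP ->; rewrite dvdz0.
split => //.
have sume : ((p ^ e)%N%:Z %| g`_Ig * h`_Ih + r)%Z.
  apply: rpredD; first by rewrite dvd_nu // main_e.
  exact: dvd_le rdiv.
have -> : nu (g`_Ig * h`_Ih + r) = e.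
  apply/eqP; rewrite eqn_leq -dvd_nu // sume andbT leqNgt -dvd_nu //.
rewrite -wg -wh /wt /e; lia.
Qed.

End S.

Lemma arith n k m a b mug muh w : (0<k -> 0<m -> n = k+m -> a+b=3 -> mug <= n * a + 3 * 0 -> mug <= n * 0 + 3 * k -> muh <= n * b+3 * 0 -> muh <= n * 0+3 * m -> 3 * n <= w -> w = mug+muh -> 3 %| n)%N.
Proof.
move=> k0 m0 -> ab g1 g2 h1 h2 hw ew; subst w.
rewrite ?muln0 ?addn0 ?mul0n ?add0n in g1 g2 h1 h2.
have e1 : mug = 3 * k by lia.
have e2 : muh = 3 * m by lia.
subst mug muh.
case: a ab g1 => [|[|[|[|a]]]] //= ab g1; try lia.
Qed.

Theorem theorem3p2 (n : nat) (f : {poly int}) (p : nat)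
  (Hsize : size f = n.+1)
  (Hn3 : ~~ (3 %| n)%N)
  (Hp : prime p)
  (Hlead : ~~ (p%:Z %| f`_n)%Z)
  (Hcoef : forall i : nat, (i < n)%N -> ((p ^ 3)%N%:Z %| f`_i)%Z)
  (H0 : ~~ ((p ^ 4)%N%:Z %| f`_0)%Z) :
  irreducible_over_Z f.
Proof.
have n0 : (0 < n)%N by case: n Hn3 {Hsize Hlead Hcoef H0}.
split; first by rewrite Hsize.
move=> [g [h [sg [sh fgh]]]].
have g0 : g != 0 by rewrite -size_poly_gt0; lia.
have h0 : h != 0 by rewrite -size_poly_gt0; lia.
set k := (size g).-1; set m := (size h).-1.
have k0 : (0 < k)%N by rewrite /k; lia.
have m0 : (0 < m)%N by rewrite /m; lia.
have nkm : n = (k + m)%N.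
  have sgk : size g = k.+1 by rewrite /k prednK // ltnW.
  have shm : size h = m.+1 by rewrite /m prednK // ltnW.
  by move: Hsize; rewrite fgh size_mul // sgk shm addSn addnS /= => [[]].
have flead : f`_n = g`_k * h`_m.
  have -> : f`_n = lead_coef f by rewrite lead_coefE Hsize.
  by rewrite fgh lead_coefM.
have nuk : nu p g`_k = 0%N.
  have gk0 : g`_k != 0 by rewrite /k -lead_coefE lead_coef_eq0.
  apply/eqP; rewrite -leqn0 leqNgt; apply/negP => hk.
  have : ((p ^ 1)%N%:Z %| g`_k)%Z by rewrite dvd_nu.
  rewrite expn1 => /(dvdz_mulr h`_m); rewrite -flead; exact/negP.
have nuhm : nu p h`_m = 0%N.
  have hm0 : h`_m != 0 by rewrite /m -lead_coefE lead_coef_eq0.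
  apply/eqP; rewrite -leqn0 leqNgt; apply/negP => hk.
  have : ((p ^ 1)%N%:Z %| h`_m)%Z by rewrite dvd_nu.
  rewrite expn1 => /(dvdz_mull g`_k); rewrite -flead; exact/negP.
have f00 : f`_0 != 0 by apply: contra H0 => /eqP ->; rewrite dvdz0.
have nuf0 : nu p f`_0 = 3%N.
  apply/eqP; rewrite eqn_leq -dvd_nu // Hcoef // andbT leqNgt -dvd_nu //.
have f0gh : f`_0 = g`_0 * h`_0 by rewrite fgh coef0M.
have gz : g`_0 != 0 by apply: contra f00; rewrite f0gh => /eqP ->; rewrite mul0r.
have hz : h`_0 != 0 by apply: contra f00; rewrite f0gh => /eqP ->; rewrite mulr0.
have nu03 : (nu p g`_0 + nu p h`_0)%N = 3%N by rewrite -nuM // -f0gh.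
have [mug [Ig Hg]] := min_exists p n g g0.
have [muh [Ih Hh]] := min_exists p n h h0.
have [fI wI] := @prod_wt p n Hp g h mug Ig muh Ih n0 Hg Hh.
rewrite -fgh in fI wI.
case: Hg => _ _ gmin _; case: Hh => _ _ hmin _.
have gk0 : g`_k != 0 by rewrite /k -lead_coefE lead_coef_eq0.
have hm0 : h`_m != 0 by rewrite /m -lead_coefE lead_coef_eq0.
have g1 := gmin 0%N gz; have g2 := gmin k gk0.
have h1 := hmin 0%N hz; have h2 := hmin m hm0.
have Ile : (Ig + Ih <= n)%N.
  rewrite leqNgt; apply/negP => hlt; move: fI; rewrite nth_default ?eqxx //.
  by rewrite Hsize.
have wIge : (3 * n <= wt p n f (Ig + Ih))%N.
  rewrite /wt; case: (ltngtP (Ig + Ih) n) Ile => // hlt _.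
    have h3 : (3 <= nu p f`_(Ig + Ih))%N by rewrite -dvd_nu // Hcoef.
    apply: leq_trans (leq_addr _ _); rewrite mulnC leq_mul2l h3 orbT //.
  by rewrite hlt leq_addl.
move: g1 g2 h1 h2; rewrite /wt nuk nuhm => g1 g2 h1 h2.
have := arith _ _ _ _ _ _ _ _ k0 m0 nkm nu03 g1 g2 h1 h2 wIge wI.
by move: Hn3 => /negP.
Qed.
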